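(* Let $G$ be a cubic graph of order $2n$ with $\chi'_{[n]}(G)=4$. Then $\chi'_{[n-1]}(G)=4$.
   Context: All graphs are finite, simple (no loops, no parallel edges), connected and cubic. For a positive integer $k$, a $[k]$-matching of $G$ is a matching of $G$ with exactly $k$ edges; an $[n]$-matching in a graph of order $2n$ is a perfect matching. The excessive $[k]$-index $\chi'_{[k]}(G)$ is the minimum number of $[k]$-matchings of $G$ whose union is $E(G)$; if some edge of $G$ lies in no $[k]$-matching, one sets $\chi'_{[k]}(G)=\infty$. *)

(* Defs.v *)
From mathcomp Require Import all_boot.
Set Implicit Arguments. Unset Strict Implicit. Unset Printing Implicit Defensive.

Section Graphs.
Variables (T : finType) (e : rel T).

Definition simple_graph : Prop := symmetric e /\ irreflexive e.

Definition cubic : Prop := forall x : T, #|[set y | e x y]| = 3.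

Definition connected_graph : Prop := forall x y : T, connect e x y.

Definition edges : {set {set T}} :=
  [set A : {set T} | [exists x, exists y, e x y && (A == [set x; y])]].

Definition matching (M : {set {set T}}) : bool :=
  (M \subset edges) &&
  [forall A in M, forall B in M, (A != B) ==> [disjoint A & B]].

Definition kmatching (k : nat) (M : {set {set T}}) : bool :=
  matching M && (#|M| == k).

Definition covered_by_kmatchings (k m : nat) : Prop :=
  exists Ms : seq {set {set T}},
    [/\ size Ms = m, all (kmatching k) Ms & \bigcup_(M <- Ms) M = edges].

(* If some edge lies in no [k]-matching,
   no cover exists and the index is infinity, so it equals no finite m. *)
Definition excessive_index_eq (k m : nat) : Prop :=
  covered_by_kmatchings k m /\
  forall m', m' < m -> ~ covered_by_kmatchings k m'.

End Graphs.

(* Main.v *)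
Require Import Defs.
From mathcomp Require Import all_boot zify.
Set Implicit Arguments. Unset Strict Implicit. Unset Printing Implicit Defensive.

Lemma edge_form (T : finType) (e : rel T) A :
  A \in edges e -> exists x y, e x y /\ A = [set x; y].
Proof.
rewrite inE => /existsP[x /existsP[y /andP[exy /eqP ->]]]; by exists x, y.
Qed.

Definition Eat (T : finType) (e : rel T) (u : T) := [set A in edges e | u \in A].

Lemma card_Eat (T : finType) (e : rel T) u :
  simple_graph e -> cubic e -> #|Eat e u| = 3.
Proof.
move=> [sy irr] cub.
have -> : Eat e u = (fun y => [set u; y]) @: [set y | e u y].
  apply/setP=> A; rewrite inE; apply/andP/imsetP.
  - case=> /edge_form[x [y [exy ->]]] /set2P[->|->].
      by exists y; rewrite ?inE.
    exists x; first by rewrite inE sy.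
    by rewrite setUC.
  - case=> y; rewrite inE => euy ->; split; last by rewrite set21.
    by rewrite inE; apply/existsP; exists u; apply/existsP; exists y; rewrite euy eqxx.
rewrite card_in_imset ?cub //.
move=> y y'; rewrite !inE => ey ey' E.
have : y \in [set u; y'] by rewrite -E set22.
case/set2P => // yu; by move: ey; rewrite yu irr.
Qed.

Lemma match_uniq (T : finType) (e : rel T) M A B u :
  matching e M -> A \in M -> B \in M -> u \in A -> u \in B -> A = B.
Proof.
case/andP=> _ /forallP H AM BM uA uB; apply/eqP; apply/negPn/negP => AB.
have := H A; rewrite AM /= => /forallP/(_ B); rewrite BM AB /=.
by move/disjoint_setI0/setP/(_ u); rewrite inE uA uB inE.
Qed.

Lemma match_card (T : finType) (e : rel T) M :
  simple_graph e -> matching e M -> #|cover M| = 2 * #|M|.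
Proof.
move=> [sy irr] HM.
have tM : trivIset M.
  apply/trivIsetP=> A B AM BM AB; case/andP: HM => _ /forallP/(_ A).
  by rewrite AM => /forallP/(_ B); rewrite BM AB.
rewrite -(eqP tM) mulnC -sum_nat_const; apply: eq_bigr => A AM.
case/andP: HM => /subsetP/(_ A AM)/edge_form[x [y [exy ->]]] _.
rewrite cards2; case: eqP => // xy; by move: exy; rewrite xy irr.
Qed.

Lemma perfect_cov (T : finType) (e : rel T) M n :
  simple_graph e -> matching e M -> #|T| = 2 * n -> #|M| = n ->
  forall u, exists2 A, A \in M & u \in A.
Proof.
move=> sg HM cT cM u.
have : cover M = setT.
  by apply/eqP; rewrite eqEcard subsetT cardsT cT (match_card sg HM) cM leqnn.
by move/setP/(_ u); rewrite inE => /bigcupP[A AM uA]; exists A.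
Qed.

Lemma perfect_card (T : finType) (e : rel T) M n :
  simple_graph e -> matching e M -> #|T| = 2 * n ->
  (forall u, exists2 A, A \in M & u \in A) -> #|M| = n.
Proof.
move=> sg HM cT H.
have : cover M = setT.
  apply/setP=> u; rewrite inE; case: (H u) => A AM uA; apply/bigcupP; by exists A.
move=> cv; have := congr1 (fun X : {set T} => #|X|) cv; rewrite /= cardsT cT (match_card sg HM).
by move/eqP; rewrite eqn_pmul2l // => /eqP.
Qed.

Lemma match_sub (T : finType) (e : rel T) M A :
  matching e M -> A \in M -> A \in edges e.
Proof. by case/andP=> /subsetP H _ /H. Qed.

Lemma inEat (T : finType) (e : rel T) u h :
  (h \in Eat e u) = (h \in edges e) && (u \in h).
Proof. by rewrite /Eat in_set. Qed.

Lemma no3 (T : finType) (e : rel T) (A B C D : {set {set T}}) g :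
  simple_graph e -> cubic e ->
  matching e A -> matching e B -> matching e C -> matching e D ->
  (forall h, h \in edges e -> [|| h \in A, h \in B, h \in C | h \in D]) ->
  g \in A -> g \in B -> g \in C -> False.
Proof.
move=> sg cub mA mB mC mD cov gA gB gC.
have gE : g \in edges e := match_sub mA gA.
case: (edge_form gE) => x [y [exy gxy]].
have xg : x \in g by rewrite gxy set21.
have gEx : g \in Eat e x by rewrite inEat gE xg.
have c2 : #|Eat e x :\ g| = 2.
  by move: (cardsD1 g (Eat e x)); rewrite gEx card_Eat // add1n => -[].
have inD : forall h, h \in Eat e x :\ g -> h \in D.
  move=> h; rewrite in_setD1 inEat => /andP[hg /andP[hE xh]].
  case/or4P: (cov h hE) => // hX.
  - by move: hg; rewrite (match_uniq mA hX gA xh xg) eqxx.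
  - by move: hg; rewrite (match_uniq mB hX gB xh xg) eqxx.
  - by move: hg; rewrite (match_uniq mC hX gC xh xg) eqxx.
have : #|Eat e x :\ g| <= 1.
  apply/card_le1_eqP => h h' hS h'S.
  apply: (match_uniq (u:=x) mD (inD _ h'S) (inD _ hS)).
  - by move: h'S; rewrite in_setD1 inEat => /andP[_ /andP[_]].
  - by move: hS; rewrite in_setD1 inEat => /andP[_ /andP[_]].
by rewrite c2.
Qed.

Lemma pair_disj (T : finType) (e : rel T) n (A B : {set {set T}}) :
  simple_graph e -> cubic e -> #|T| = 2 * n ->
  kmatching e n A -> kmatching e n B -> A :&: B = set0 ->
  covered_by_kmatchings e n 3.
Proof.
move=> sg cub cT /andP[mA /eqP cA] /andP[mB /eqP cB] AB.
pose R := edges e :\: (A :|: B).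
have key : forall u, exists S : {set {set T}},
    [/\ #|S| = 1, S \subset Eat e u & forall h, h \in Eat e u -> (h \in R) = (h \in S)].
  move=> u.
  case: (perfect_cov sg mA cT cA u) => a aA ua.
  case: (perfect_cov sg mB cT cB u) => b bB ub.
  have ab : a != b.
    apply/eqP => eab; move/setP: AB => /(_ a); rewrite !inE aA eab bB //.
  have aE : a \in Eat e u by rewrite inEat ua andbT (match_sub mA aA).
  have bE : b \in Eat e u by rewrite inEat ub andbT (match_sub mB bB).
  exists (Eat e u :\ a :\ b); split.
    2: by apply/subsetP=> h; rewrite !in_setD1 => /andP[_ /andP[_]].
    move: (cardsD1 a (Eat e u)) (cardsD1 b (Eat e u :\ a)).
    have bA : b \in Eat e u :\ a by rewrite in_setD1 eq_sym ab bE.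
    rewrite aE bA card_Eat // /= => H1 H2; lia.
  move=> h; rewrite !inE => /andP[hE uh]; rewrite hE uh !andbT.
  apply/idP/idP.
  - case/norP=> hA hB; apply/andP; split; apply/eqP=> E; subst h.
    + by rewrite bB in hB.
    + by rewrite aA in hA.
  - case/andP=> hb ha; apply/norP; split; apply/negP => hX.
    + by move: ha; rewrite (match_uniq mA hX aA uh ua) eqxx.
    + by move: hb; rewrite (match_uniq mB hX bB uh ub) eqxx.
have RE : R \subset edges e by apply/subsetP=> h; rewrite inE => /andP[].
have mR : matching e R.
  rewrite /matching RE /=; apply/forallP => C; apply/implyP => CR.
  apply/forallP => D; apply/implyP => DR; apply/implyP => CD.
  rewrite -setI_eq0; apply/eqP/setP => u; rewrite !inE; apply/negP => /andP[uC uD].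
  case: (key u) => S [cS sS hS].
  have CS : C \in S by rewrite -hS // inE uC (subsetP RE _ CR).
  have DS : D \in S by rewrite -hS // inE uD (subsetP RE _ DR).
  have : #|S| <= 1 by rewrite cS.
  by move/card_le1_eqP/(_ D C DS CS) => E; rewrite E eqxx in CD.
have cR : #|R| = n.
  apply: (perfect_card sg mR cT) => u.
  case: (key u) => S [cS sS hS].
  have : 0 < #|S| by rewrite cS.
  case/card_gt0P => h hS'.
  have hE := subsetP sS _ hS'.
  exists h; first by rewrite hS.
  by move: hE; rewrite inEat => /andP[].
rewrite /covered_by_kmatchings; exists [:: A; B; R]; split => //.
  by rewrite /= /kmatching mA mB mR cA cB cR eqxx.
rewrite !big_cons big_nil setU0; apply/setP => h.
apply/idP/idP.
  by case/setUP => [/(match_sub mA)|/setUP[/(match_sub mB)|/(subsetP RE)]].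
move=> hE; rewrite !in_setU in_setD hE andbT !in_setU; by case: (h \in A); case: (h \in B).
Qed.

Lemma lower (T : finType) (e : rel T) n (Ms : seq {set {set T}}) :
  simple_graph e -> cubic e -> #|T| = 2 * n -> 0 < n ->
  size Ms < 4 -> all (kmatching e n.-1) Ms ->
  \bigcup_(M <- Ms) M = edges e -> False.
Proof.
move=> sg cub cT n0 sMs /allP allM cov.
have mM : forall M, M \in Ms -> matching e M.
  by move=> M /allM /andP[].
have cM : forall M, M \in Ms -> #|M| = n.-1.
  by move=> M /allM /andP[_ /eqP].
pose f (A : {set T}) := odflt set0 [pick M | (M \in Ms) && (A \in M)].
have fP : forall A, A \in edges e -> f A \in Ms /\ A \in f A.
  move=> A; rewrite -cov bigcup_seq => /bigcupP[M MMs AM].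
  rewrite /f; case: pickP => [M' /andP[] //|/(_ M)].
  by rewrite MMs AM.
have surj : forall v M, M \in Ms -> exists2 A, A \in M & v \in A.
  move=> v.
  have inj : {in Eat e v &, injective f}.
    move=> A B; rewrite !inEat => /andP[AE vA] /andP[BE vB] fAB.
    case: (fP A AE) => fA Af; case: (fP B BE) => _ Bf.
    rewrite -fAB in Bf.
    exact: (match_uniq (mM _ fA) Af Bf vA vB).
  have sub : f @: Eat e v \subset [set M | M \in Ms].
    apply/subsetP => M /imsetP[A]; rewrite inEat => /andP[AE _] ->.
    by rewrite inE; case: (fP A AE).
  have cI : #|f @: Eat e v| = 3 by rewrite card_in_imset // card_Eat.
  have le3 : #|[set M | M \in Ms]| <= 3.
    rewrite cardsE; apply: leq_trans (card_size Ms) _; exact: sMs.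
  have : f @: Eat e v == [set M | M \in Ms] by rewrite eqEcard sub cI le3.
  move/eqP => E M MMs.
  have : M \in f @: Eat e v by rewrite E inE.
  case/imsetP => A; rewrite inEat => /andP[AE vA] ->.
  by exists A => //; case: (fP A AE).
have : 0 < #|T| by rewrite cT; lia.
case/card_gt0P => u _.
have : 0 < #|Eat e u| by rewrite card_Eat.
case/card_gt0P => A; rewrite inEat => /andP[AE _].
case: (fP A AE) => MMs _.
have := perfect_card sg (mM _ MMs) cT (fun v => surj v _ MMs).
rewrite cM //; lia.
Qed.

Lemma matchingD (T : finType) (e : rel T) M p :
  matching e M -> matching e (M :\ p).
Proof.
case/andP => sub /forallP H; apply/andP; split.
  apply: subset_trans sub; exact: subsetDl.
apply/forallP => A; apply/implyP => /setD1P[_ AM].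
apply/forallP => B; apply/implyP => /setD1P[_ BM].
by move: (H A); rewrite AM /= => /forallP/(_ B); rewrite BM.
Qed.

Lemma kmatchingD (T : finType) (e : rel T) n M p :
  kmatching e n M -> p \in M -> kmatching e n.-1 (M :\ p).
Proof.
case/andP => mM /eqP cM pM; rewrite /kmatching matchingD //=.
move: (cardsD1 p M); rewrite pM cM => ->; by rewrite add1n.
Qed.

Theorem mainTheorem7 (T : finType) (e : rel T) (n : nat) :
  simple_graph e -> connected_graph e -> cubic e ->
  #|T| = 2 * n ->
  excessive_index_eq e n 4 ->
  excessive_index_eq e n.-1 4.
Proof.
move=> sg _ cub cT [[Ms [sz all4 cov]] minH].
have n0 : 0 < n.
  case: n cT minH {all4} => // cT0 minH; exfalso.
  apply: (minH 0) => //; exists [::]; split => //.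
  rewrite big_nil; apply/setP => A; rewrite in_set0; apply/esym; apply: negbTE; apply/negP.
  case/edge_form => x _.
  by have := card0_eq cT0 x.
split; last first.
  move=> m' m'4 [Ms' [sz' all' cov']].
  by apply: (lower sg cub cT n0 _ all' cov'); rewrite sz'.
case: Ms sz all4 cov => [|M1 [|M2 [|M3 [|M4 [|]]]]] // _.
rewrite /= andbT => /and4P[k1 k2 k3 k4].
rewrite !big_cons big_nil setU0 => cov.
have m1 : matching e M1 by case/andP: k1.
have m2 : matching e M2 by case/andP: k2.
have m3 : matching e M3 by case/andP: k3.
have m4 : matching e M4 by case/andP: k4.
have covH : forall h, h \in edges e -> [|| h \in M1, h \in M2, h \in M3 | h \in M4].
  by move=> h; rewrite -cov !in_setU.
have pairP : forall A B, kmatching e n A -> kmatching e n B ->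
    exists2 p, p \in A & p \in B.
  move=> A B kA kB.
  have : A :&: B != set0.
    apply/negP => /eqP AB; exact: (minH 3 _ (pair_disj sg cub cT kA kB AB)).
  by case/set0Pn => p; rewrite in_setI => /andP[]; exists p.
case: (pairP _ _ k1 k2) => p12 p12a p12b.
case: (pairP _ _ k2 k3) => p23 p23a p23b.
case: (pairP _ _ k3 k4) => p34 p34a p34b.
case: (pairP _ _ k4 k1) => p41 p41a p41b.
have d1 : p12 != p23.
  apply/eqP => E; subst p23.
  apply: (no3 sg cub m1 m2 m3 m4 covH p12a p12b p23b).
have d2 : p23 != p34.
  apply/eqP => E; subst p34.
  apply: (no3 (D := M1) sg cub m2 m3 m4 m1 _ p23a p23b p34b).
  by move=> h /covH; case/or4P => ->; rewrite ?orbT.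
have d3 : p34 != p41.
  apply/eqP => E; subst p41.
  apply: (no3 (D := M2) sg cub m3 m4 m1 m2 _ p34a p34b p41b).
  by move=> h /covH; case/or4P => ->; rewrite ?orbT.
have d4 : p41 != p12.
  apply/eqP => E; subst p41.
  apply: (no3 (D := M3) sg cub m4 m1 m2 m3 _ p41a p12a p12b).
  by move=> h /covH; case/or4P => ->; rewrite ?orbT.
exists [:: M1 :\ p12; M2 :\ p23; M3 :\ p34; M4 :\ p41]; split => //.
  by rewrite /= !kmatchingD.
rewrite !big_cons big_nil setU0; apply/setP => h; apply/idP/idP.
  rewrite -cov !in_setU !in_setD1.
  by case/or4P => /andP[_ ->]; rewrite ?orbT.
move/covH; rewrite !in_setU !in_setD1.
case/or4P => hM.
- have [->|ne] := eqVneq h p12.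
    by apply/or4P; apply: Or42; apply/andP; split; [exact: d1|].
  by apply/or4P; apply: Or41; apply/andP; split.
- have [->|ne] := eqVneq h p23.
    by apply/or4P; apply: Or43; apply/andP; split; [exact: d2|].
  by apply/or4P; apply: Or42; apply/andP; split.
- have [->|ne] := eqVneq h p34.
    by apply/or4P; apply: Or44; apply/andP; split; [exact: d3|].
  by apply/or4P; apply: Or43; apply/andP; split.
- have [->|ne] := eqVneq h p41.
    by apply/or4P; apply: Or41; apply/andP; split; [exact: d4|].
  by apply/or4P; apply: Or44; apply/andP; split.
Qed.
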